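(* Let $X$ be a Banach lattice and let $S$ be a singular functional on $X$. Then $$\|S\|_{X^*}=\sup\left\{\frac{S(f)}{\operatorname{dist}_X(f,X_a)}: f\in X\setminus X_a,\ \|f\|_X=1\right\}.$$
   Context: $X^*$ is the topological dual of $X$. For a Banach lattice $X$, an element $x$ is order continuous if for every sequence $0\le x_n\le|x|$ with $x_n\downarrow0$ one has $\|x_n\|\to0$; $X_a$ is the closed ideal of order continuous elements. A singular functional is an $S\in X^*$ with $S(x)=0$ for all $x\in X_a$. $\operatorname{dist}_X(f,X_a)=\inf\{\|f-g\|_X:g\in X_a\}$. *)

(* Defs.v *)
From HB Require Import structures.
From mathcomp Require Import all_boot all_order all_algebra.
From mathcomp Require Import all_classical all_reals all_analysis.
Set Implicit Arguments. Unset Strict Implicit. Unset Printing Implicit Defensive.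
Import Order.TTheory GRing.Theory Num.Theory.
Import numFieldNormedType.Exports.
Local Open Scope classical_set_scope.
Local Open Scope ring_scope.

Section BanachLattice.
Variables (R : realType) (X : completeNormedModType R) (le : X -> X -> Prop).

Definition is_lub (A : set X) (s : X) : Prop :=
  (forall a, A a -> le a s) /\ (forall u, (forall a, A a -> le a u) -> le s u).

Definition is_glb (A : set X) (i : X) : Prop :=
  (forall a, A a -> le i a) /\ (forall l, (forall a, A a -> le l a) -> le l i).

Definition is_abs (x a : X) : Prop := is_lub [set x; - x] a.

Definition banach_lattice : Prop :=
  (forall x, le x x) /\
  (forall x y, le x y -> le y x -> x = y) /\
  (forall x y z, le x y -> le y z -> le x z) /\
  (forall x y z, le x y -> le (x + z) (y + z)) /\
  (forall (a : R) x y, 0 <= a -> le x y -> le (a *: x) (a *: y)) /\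
  (forall x y, exists s, is_lub [set x; y] s) /\
  (forall x y ax ay, is_abs x ax -> is_abs y ay -> le ax ay ->
      `|x| <= `|y|).

Definition decr_to_zero (u : nat -> X) : Prop :=
  (forall n, le (u n.+1) (u n)) /\ is_glb (range u) 0.

Definition order_continuous (x : X) : Prop :=
  forall ax, is_abs x ax ->
  forall u : nat -> X, (forall n, le 0 (u n) /\ le (u n) ax) ->
    decr_to_zero u -> (fun n => `|u n|) @ \oo --> (0 : R).

Definition Xa : set X := [set x | order_continuous x].

Definition dist_Xa (f : X) : R := inf [set `|f - g| | g in Xa].

End BanachLattice.

Definition is_bounded_functional (R : realType) (X : normedModType R)
  (S : X -> R) : Prop :=
  (forall (a : R) (x y : X), S (a *: x + y) = a * S x + S y) /\ continuous S.

Definition dual_norm (R : realType) (X : normedModType R) (S : X -> R) : R :=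
  sup [set `|S x| | x in [set x : X | `|x| <= 1]].

(* Main.v *)
Require Import Defs.
From HB Require Import structures.
From mathcomp Require Import all_boot all_order all_algebra.
From mathcomp Require Import all_classical all_reals all_analysis.
From mathcomp Require Import lra.
Import Order.TTheory GRing.Theory Num.Theory.
Import numFieldNormedType.Exports.
Local Open Scope classical_set_scope.
Local Open Scope ring_scope.

Section Aux.
Variables (R : realType) (X : normedModType R) (S : X -> R).
Hypothesis lin : forall (a : R) (x y : X), S (a *: x + y) = a * S x + S y.

Lemma S0 : S 0 = 0.
Proof.
have := lin 1 0 0; rewrite scaler0 addr0 mul1r; set s := S 0 => H; lra.
Qed.

Lemma SZ a x : S (a *: x) = a * S x.
Proof. by have := lin a x 0; rewrite addr0 S0 addr0. Qed.

Lemma SB x y : S (x - y) = S x - S y.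
Proof. by have := lin (-1) y x; rewrite scaleN1r addrC => ->; rewrite mulN1r addrC. Qed.

Lemma Sbound : continuous S -> exists M : R, 0 < M /\ forall x, `|S x| <= M * `|x|.
Proof.
move=> cS.
have := @cvgr_dist_lt _ _ _ (nbhs (0:X)) _ S (S 0) (cS 0) 1 ltr01.
move=> H0; have [e /= e0 He] := nbhs_norm0P.1 (H0 _).
exists (2 / e); split; first by rewrite divr_gt0.
move=> x; have [->|x0] := eqVneq x 0; first by rewrite S0 !normr0 mulr0.
have nx : 0 < `|x| by rewrite normr_gt0.
pose c := e / (2 * `|x|).
have c0 : 0 < c by rewrite divr_gt0 // mulr_gt0.
have cx : c * `|x| = e / 2.
  by rewrite /c invfM mulrA -mulrA mulVf ?gt_eqF // mulr1.
have H : `|S (c *: x)| < 1.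
  have := He (c *: x) => /=; rewrite S0 sub0r normrN => h; apply: h.
  by rewrite normrZ (gtr0_norm c0) cx ltr_pdivrMr // ltr_pMr // ltr1n.
move: H; rewrite SZ normrM (gtr0_norm c0) => H.
have : `|S x| <= c^-1 by rewrite -(ler_pM2l c0) mulfV ?gt_eqF // ltW.
by rewrite /c invf_div mulrAC. Qed.
End Aux.

Lemma Xa0 (R : realType) (X : completeNormedModType R) (le : X -> X -> Prop) :
  banach_lattice le -> Xa le 0.
Proof.
move=> [lr [las [ltr _]]] ax [ubax lub] u hu _.
have ax0 : ax = 0.
  apply: las.
    by apply: lub => a [->|->]; rewrite ?oppr0; apply: lr.
  by apply: ubax; left.
have u0 : forall n, u n = 0.
  by move=> n; have [h1 h2] := hu n; apply: las => //; rewrite -ax0.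
have -> : (fun n => `|u n|) = fun _ => (0:R) by apply/funext => n; rewrite u0 normr0.
exact: cvg_cst.
Qed.

Theorem lemma2p2 (R : realType) (X : completeNormedModType R)
  (le : X -> X -> Prop) (S : X -> R) :
  banach_lattice le ->
  is_bounded_functional S ->
  (forall x, Xa le x -> S x = 0) ->
  dual_norm S =
  sup [set S f / dist_Xa le f | f in [set f : X | ~ Xa le f /\ `|f| = 1]].
Proof.
move=> bl [lin cS] sing.
have [M [M0 HM]] := @Sbound _ _ S lin cS.
have S0' := @S0 _ _ S lin. have SZ' := @SZ _ _ S lin. have SB' := @SB _ _ S lin.
set A := [set `|S x| | x in [set x : X | `|x| <= 1]].
set B := [set S f / dist_Xa le f | f in [set f : X | ~ Xa le f /\ `|f| = 1]].
have A0 : A 0 by exists 0; rewrite /= ?S0' ?normr0.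
have hA : has_sup A.
  split; first by exists 0.
  exists M => _ [x /= x1 <-]; apply: (le_trans (HM x)).
  by rewrite -[leRHS]mulr1 ler_wpM2l // ltW.
rewrite /dual_norm -/A.
set N := sup A.
have N0 : 0 <= N by apply: sup_upper_bound.
have bnd : forall x, `|S x| <= N * `|x|.
  move=> x; have [->|x0] := eqVneq x 0; first by rewrite S0' !normr0 mulr0.
  have nx : 0 < `|x| by rewrite normr_gt0.
  have : A `|S (`|x|^-1 *: x)|.
    exists (`|x|^-1 *: x) => //=.
    by rewrite normrZ normrV ?unitfE ?gt_eqF // normr_id mulVf ?gt_eqF.
  move=> /(sup_upper_bound hA); rewrite SZ' normrM normrV ?unitfE ?gt_eqF //.
  by rewrite normr_id -/N ler_pdivrMl // mulrC.
have dnn : forall f, [set `|f - g| | g in Xa le] !=set0.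
  by move=> f; exists `|f - 0|, 0 => //; apply: Xa0.
have dlb : forall f, has_lbound [set `|f - g| | g in Xa le].
  by move=> f; exists 0 => _ [g _ <-].
have dge0 : forall f, 0 <= dist_Xa le f.
  by move=> f; apply: lb_le_inf => // _ [g _ <-].
have dle : forall f, dist_Xa le f <= `|f|.
  by move=> f; rewrite -[X in `|X|]subr0; apply: ge_inf => //; exists 0 => //; apply: Xa0.
have key : forall f, S f <= N * dist_Xa le f.
  move=> f; have [N00|Np] := eqVneq N 0.
    by rewrite N00 mul0r; apply: (le_trans (ler_norm _)); rewrite -(mul0r `|f|) -N00.
  have Np' : 0 < N by rewrite lt_neqAle eq_sym Np.
  rewrite -ler_pdivrMl //; apply: lb_le_inf => // _ [g Xg <-].
  rewrite ler_pdivrMl //; apply: (le_trans (ler_norm _)).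
  by rewrite -[S f]subr0 -(sing _ Xg) -SB'.
have ubB : ubound B N.
  move=> _ [f [_ f1] <-].
  have [d0|dp] := eqVneq (dist_Xa le f) 0; first by rewrite d0 invr0 mulr0.
  have dp' : 0 < dist_Xa le f by rewrite lt_neqAle eq_sym dp dge0.
  by rewrite ler_pdivrMr.
have claim : forall x, S x != 0 -> exists2 b, B b & `|S x| / `|x| <= b.
  move=> x Sx0.
  have x0 : x != 0 by apply: contraNneq Sx0 => ->; rewrite S0'.
  have nx : 0 < `|x| by rewrite normr_gt0.
  pose f := (`|x|^-1 * Num.sg (S x)) *: x.
  have Sf : S f = `|S x| / `|x|.
    by rewrite /f SZ' -mulrA -normrEsg mulrC.
  have Sfp : 0 < S f by rewrite Sf divr_gt0 // normr_gt0.
  have f1 : `|f| = 1.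
    rewrite /f normrZ normrM normr_sg Sx0 mulr1 normrV ?unitfE ?gt_eqF //.
    by rewrite normr_id mulVf ?gt_eqF.
  have nXf : ~ Xa le f by move=> /sing; apply/eqP; rewrite gt_eqF.
  have dp : 0 < dist_Xa le f.
    rewrite lt_neqAle dge0 andbT; apply/eqP => d0.
    by move: (key f); rewrite -d0 mulr0 leNgt Sfp.
  exists (S f / dist_Xa le f); first by exists f.
  by rewrite -Sf ler_pdivlMr // ger_pMr // -f1.
have supB0 : 0 <= sup B.
  have [[b Bb]|nB] := pselect (B !=set0); last first.
    have -> : B = set0 by apply/seteqP; split => // b Bb; apply: nB; exists b.
    by rewrite sup0.
  have hB : has_sup B by split; [exists b | exists N].
  have [b0|bn] := leP 0 b; first exact: (le_trans b0 (sup_upper_bound hB Bb)).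
  case: Bb bn => f [_ f1] <- bn.
  have Sf0 : S f != 0 by apply: contraTneq bn => ->; rewrite mul0r ltxx.
  have [b' Bb' hb'] := claim f Sf0.
  apply: (le_trans _ (sup_upper_bound hB Bb')); apply: (le_trans _ hb').
  by rewrite divr_ge0.
apply/eqP; rewrite eq_le; apply/andP; split.
  apply: ge_sup; first by exists 0.
  move=> _ [x /= x1 <-].
  have [Sx0|Sx0] := eqVneq (S x) 0; first by rewrite Sx0 normr0.
  have [b Bb hb] := claim x Sx0.
  have x0 : x != 0 by apply: contraNneq Sx0 => ->; rewrite S0'.
  have nx : 0 < `|x| by rewrite normr_gt0.
  have hB : has_sup B by split; [exists b | exists N].
  apply: (le_trans _ (sup_upper_bound hB Bb)); apply: (le_trans _ hb).
  by rewrite ler_pdivlMr // ger_pMr // normr_gt0.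
have [[b Bb]|nB] := pselect (B !=set0); last first.
  have -> : B = set0 by apply/seteqP; split => // b Bb; apply: nB; exists b.
  by rewrite sup0.
by apply: ge_sup => //; exists b.
Qed.
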